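(* Assume that (CVOP) has a solution, and let $\bar S\subseteq S_a$ be a solution of the associated projection (Pv) satisfying $Y_a=\operatorname{conv}\operatorname{proj}_y[\bar S]$. Then $\bar X:=\{x:(x,y)\in\bar S,\ y\notin\Gamma[\mathcal{X}]+(C\setminus\{0\})\}$ is a solution of (CVOP).
   Context: (CVOP): $\min\Gamma(x)$ w.r.t. $\le_C$ s.t. $x\in\mathcal{X}$, with $C\subseteq\mathbb{R}^m$ a non-trivial pointed solid convex cone, $\mathcal{X}\subseteq\mathbb{R}^n$ convex, $\Gamma$ $C$-convex; upper image $\mathcal{G}=\operatorname{cl}(\Gamma[\mathcal{X}]+C)$. $\bar x\in\mathcal{X}$ is a minimizer if $(\Gamma(\bar x)-C\setminus\{0\})\cap\Gamma[\mathcal{X}]=\emptyset$. $\bar X\subseteq\mathcal{X}$ is an infimizer if $\mathcal{G}=\operatorname{cl}\operatorname{conv}(\Gamma[\bar X]+C)$, and a solution if it is an infimizer consisting of minimizers only. $S_a=\{(x,y):x\in\mathcal{X},y\in\Gamma(x)+C\}$, $Y_a=\operatorname{proj}_y[S_a]$, and $\bar S\subseteq S_a$ is a solution of (Pv) if $Y_a\subseteq\operatorname{cl}\operatorname{conv}\operatorname{proj}_y[\bar S]$. *)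

(* Defs.v *)
(* Vectors of R^k are row vectors 'rV[R]_k
   over an abstract R : realType, with the (canonical, product = Euclidean)
   topology on matrices provided by MathComp-Analysis. *)
From mathcomp Require Import all_boot all_order all_algebra.
From mathcomp Require Import all_classical all_reals all_analysis.
Import numFieldNormedType.Exports.
Import Order.TTheory GRing.Theory Num.Theory.
Set Implicit Arguments. Unset Strict Implicit. Unset Printing Implicit Defensive.
Local Open Scope classical_set_scope.
Local Open Scope ring_scope.

Definition mink_sum (R : realType) (k : nat) (A B : set 'rV[R]_k) : set 'rV[R]_k :=
  [set z | exists a b, A a /\ B b /\ z = a + b].

Definition cvx_hull (R : realType) (k : nat) (A : set 'rV[R]_k) : set 'rV[R]_k :=
  [set z | exists (p : nat) (l : 'I_p -> R) (a : 'I_p -> 'rV[R]_k),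
     (forall i, 0 <= l i) /\ \sum_(i < p) l i = 1 /\ (forall i, A (a i)) /\
     z = \sum_(i < p) l i *: a i].

Definition cvx_set (R : realType) (k : nat) (A : set 'rV[R]_k) : Prop :=
  forall x y (t : R), A x -> A y -> 0 <= t <= 1 -> A (t *: x + (1 - t) *: y).

Definition is_cone (R : realType) (k : nat) (C : set 'rV[R]_k) : Prop :=
  forall x (t : R), C x -> 0 <= t -> C (t *: x).

Definition convex_cone (R : realType) (k : nat) (C : set 'rV[R]_k) : Prop :=
  is_cone C /\ cvx_set C.

Definition pointed_cone (R : realType) (k : nat) (C : set 'rV[R]_k) : Prop :=
  forall x, C x -> C (- x) -> x = 0.

Definition solid_set (R : realType) (k : nat) (C : set 'rV[R]_k) : Prop :=
  exists x, (interior C) x.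

Definition nontrivial_cone (R : realType) (k : nat) (C : set 'rV[R]_k) : Prop :=
  C <> [set 0] /\ C <> setT.

Definition leC (R : realType) (k : nat) (C : set 'rV[R]_k) (y1 y2 : 'rV[R]_k) : Prop :=
  C (y2 - y1).

Definition C_convex (R : realType) (n m : nat) (C : set 'rV[R]_m)
  (X : set 'rV[R]_n) (G : 'rV[R]_n -> 'rV[R]_m) : Prop :=
  forall x y (t : R), X x -> X y -> 0 <= t <= 1 ->
    leC C (G (t *: x + (1 - t) *: y)) (t *: G x + (1 - t) *: G y).

Definition Cnz (R : realType) (k : nat) (C : set 'rV[R]_k) : set 'rV[R]_k :=
  [set c | C c /\ c <> 0].

Definition upper_image (R : realType) (n m : nat) (C : set 'rV[R]_m)
  (X : set 'rV[R]_n) (G : 'rV[R]_n -> 'rV[R]_m) : set 'rV[R]_m :=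
  closure (mink_sum (G @` X) C).

Definition minimizer (R : realType) (n m : nat) (C : set 'rV[R]_m)
  (X : set 'rV[R]_n) (G : 'rV[R]_n -> 'rV[R]_m) (xb : 'rV[R]_n) : Prop :=
  X xb /\ ~ (exists y, (exists c, Cnz C c /\ y = G xb - c) /\ (G @` X) y).

Definition infimizer (R : realType) (n m : nat) (C : set 'rV[R]_m)
  (X : set 'rV[R]_n) (G : 'rV[R]_n -> 'rV[R]_m) (Xb : set 'rV[R]_n) : Prop :=
  Xb `<=` X /\ upper_image C X G = closure (cvx_hull (mink_sum (G @` Xb) C)).

Definition cvop_solution (R : realType) (n m : nat) (C : set 'rV[R]_m)
  (X : set 'rV[R]_n) (G : 'rV[R]_n -> 'rV[R]_m) (Xb : set 'rV[R]_n) : Prop :=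
  infimizer C X G Xb /\ (forall x, Xb x -> minimizer C X G x).

Definition S_a (R : realType) (n m : nat) (C : set 'rV[R]_m)
  (X : set 'rV[R]_n) (G : 'rV[R]_n -> 'rV[R]_m) : set ('rV[R]_n * 'rV[R]_m) :=
  [set p | X p.1 /\ mink_sum [set G p.1] C p.2].

Definition Y_a (R : realType) (n m : nat) (C : set 'rV[R]_m)
  (X : set 'rV[R]_n) (G : 'rV[R]_n -> 'rV[R]_m) : set 'rV[R]_m :=
  snd @` S_a C X G.

Definition pv_solution (R : realType) (n m : nat) (C : set 'rV[R]_m)
  (X : set 'rV[R]_n) (G : 'rV[R]_n -> 'rV[R]_m)
  (Sb : set ('rV[R]_n * 'rV[R]_m)) : Prop :=
  Sb `<=` S_a C X G /\ Y_a C X G `<=` closure (cvx_hull (snd @` Sb)).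

(* Main.v *)
Require Import Defs.
From mathcomp Require Import all_boot all_order all_algebra.
From mathcomp Require Import all_classical all_reals all_analysis.
From mathcomp Require Import ring lra.
Import numFieldNormedType.Exports.
Import Order.TTheory GRing.Theory Num.Theory.
Local Open Scope classical_set_scope.
Local Open Scope ring_scope.

Lemma cvx_hullK (R : realType) (k : nat) (A K : set 'rV[R]_k) :
  cvx_set K -> A `<=` K -> cvx_hull A `<=` K.
Proof.
move=> cK AK z [p [l [a [l0 [l1 [Aa ->]]]]]].
elim: p l a l0 l1 Aa => [|p IH] l a l0 l1 Aa.
  by move: l1; rewrite big_ord0 => /eqP; rewrite eq_sym oner_eq0.
rewrite big_ord_recl in l1. rewrite big_ord_recl.
set s := \sum_(i < p) l (lift ord0 i) in l1.
have s0 : 0 <= s by apply: sumr_ge0 => i _.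
have eqs : l ord0 = 1 - s by rewrite -l1 addrK.
have [sz|snz] := eqVneq s 0.
  have h : forall i, l (lift ord0 i) = 0.
    by move=> i; apply: (psumr_eq0P (P := predT) _ sz) => // j _.
  rewrite big1 ?addr0; last by move=> i _; rewrite h scale0r.
  by rewrite eqs sz subr0 scale1r; apply: AK.
have sp : 0 < s by rewrite lt_def snz s0.
have Hw := IH (fun i => l (lift ord0 i) / s) (fun i => a (lift ord0 i)).
have -> : \sum_(i<p) l (lift ord0 i) *: a (lift ord0 i) =
   s *: \sum_(i<p) (l (lift ord0 i) / s) *: a (lift ord0 i).
  rewrite scaler_sumr; apply: eq_bigr => i _.
  by rewrite scalerA mulrCA divff ?mulr1.
have l0' := l0 ord0.
have Hw' : K (\sum_(i < p) (l (lift ord0 i) / s) *: a (lift ord0 i)).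
  apply: Hw.
  - by move=> i; rewrite divr_ge0.
  - by rewrite -mulr_suml divff.
  - by move=> i; apply: Aa.
have := cK (a ord0) _ (1 - s) (AK _ (Aa ord0)) Hw'.
have -> : 1 - (1 - s) = s by ring.
rewrite -eqs; apply; apply/andP; split; lra.
Qed.

Lemma split_l m n (j : 'I_m) : fintype.split (lshift n j) = inl j.
Proof. exact: (unsplitK (inl j)). Qed.
Lemma split_r m n (j : 'I_n) : fintype.split (rshift m j) = inr j.
Proof. exact: (unsplitK (inr j)). Qed.

Lemma cvx_hull_cvx (R : realType) (k : nat) (A : set 'rV[R]_k) :
  cvx_set (cvx_hull A).
Proof.
move=> x y t [p [l [a [l0 [l1 [Aa ->]]]]]]
  [q [l' [a' [l0' [l1' [Aa' ->]]]]]] /andP[t0 t1].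
exists (p + q)%N,
  (fun i => match fintype.split i with inl j => t * l j | inr j => (1 - t) * l' j end),
  (fun i => match fintype.split i with inl j => a j | inr j => a' j end).
split; [|split; [|split]].
- move=> i; case: (fintype.split i) => j; apply: mulr_ge0 => //; lra.
- rewrite big_split_ord /=.
  under eq_bigr do rewrite split_l.
  under [X in _ + X]eq_bigr do rewrite split_r.
  by rewrite -!mulr_sumr l1 l1' !mulr1 addrC subrK.
- by move=> i; case: (fintype.split i).
- symmetry; rewrite big_split_ord /=.
  under eq_bigr do rewrite split_l.
  under [X in _ + X = _]eq_bigr do rewrite split_r.
  rewrite !scaler_sumr; congr (_ + _); apply: eq_bigr => i _;
  by rewrite scalerA.
Qed.
Theorem mainTheorem14 (R : realType) (n m : nat) (C : set 'rV[R]_m)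
  (X : set 'rV[R]_n) (G : 'rV[R]_n -> 'rV[R]_m)
  (hCnt : nontrivial_cone C) (hCcc : convex_cone C) (hCp : pointed_cone C)
  (hCs : solid_set C) (hX : cvx_set X) (hG : C_convex C X G)
  (hsol : exists Xb, cvop_solution C X G Xb)
  (Sb : set ('rV[R]_n * 'rV[R]_m))
  (hSb : pv_solution C X G Sb)
  (hY : Y_a C X G = cvx_hull (snd @` Sb)) :
  cvop_solution C X G
    [set x | exists y, Sb (x, y) /\ ~ mink_sum (G @` X) (Cnz C) y].
Proof.
have [hcone hcvx] := hCcc.
have C0 : C 0.
  by case: hCs => c /interior_subset Cc; have := hcone c 0 Cc (lexx 0); rewrite scale0r.
have Cadd : forall a b, C a -> C b -> C (a + b).
  move=> a b Ca Cb.
  have h1 : 0 <= (2^-1 : R) <= 1 by apply/andP; split; lra.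
  have := hcone _ 2 (hcvx a b _ Ca Cb h1) ltac:(lra).
  have -> : 1 - 2^-1 = 2^-1 :> R by field.
  by rewrite scalerDr !scalerA divff ?pnatr_eq0 // !scale1r.
set M := mink_sum (G @` X) C.
set Xbar := [set x | exists y, Sb (x, y) /\ ~ mink_sum (G @` X) (Cnz C) y].
have Mcvx : cvx_set M.
  move=> y1 y2 t [g1 [c1 [[x1 Xx1 <-] [Cc1 ->]]]] [g2 [c2 [[x2 Xx2 <-] [Cc2 ->]]]] ht.
  exists (G (t *: x1 + (1 - t) *: x2)),
    ((t *: G x1 + (1 - t) *: G x2 - G (t *: x1 + (1 - t) *: x2)) + (t *: c1 + (1 - t) *: c2)).
  split; first by exists (t *: x1 + (1 - t) *: x2) => //; apply: hX.
  split; first by apply: Cadd; [exact: hG | exact: hcvx].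
  by rewrite [RHS]addrA [G _ + (_ - _)]addrC subrK !scalerDr addrACA.
have SbM : forall pr, Sb pr -> M pr.2.
  move=> pr /(hSb.1) [Xp [a [b [-> [Cb ->]]]]].
  by exists (G pr.1), b; split => //; exists pr.1.
have XbarX : Xbar `<=` X.
  by move=> x [y [/(hSb.1) [] //]].
split; last first.
  move=> x Xx; split; first exact: XbarX.
  case: Xx => y [Sxy Ny] [w [[c [[Cc cnz] ->]] [u Xu Gu]]].
  have [_ [a [b [/= aE [Cb yE]]]]] := hSb.1 _ Sxy; rewrite yE aE in Ny.
  apply: Ny; exists (G u), (c + b); split; first by exists u.
  split; last by rewrite Gu addrA subrK.
  split; first exact: Cadd.
  move=> /eqP; rewrite addr_eq0 => /eqP eb.
  by apply: cnz; apply: hCp => //; rewrite eb opprK.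
split => //.
rewrite /upper_image -/M.
apply/seteqP; split; last first.
  apply: closureS; apply: cvx_hullK => // v [g [c [[x Xx <-] [Cc ->]]]].
  by exists (G x), c; split => //; exists x => //; apply: XbarX.
case: hsol => Xb [[XbX eqU] Xbmin]; rewrite /upper_image -/M in eqU; rewrite eqU.
apply: closureS; apply: cvx_hullK; first exact: cvx_hull_cvx.
move=> v [g [c [[x Xbx <-] [Cc ->]]]].
have [Xx xmin] := Xbmin x Xbx.
have : Y_a C X G (G x).
  exists (x, G x) => //; split => //; exists (G x), 0; split => //; split => //.
  by rewrite addr0.
rewrite hY => -[p [l [ys [l0 [l1 [Hys Geq]]]]]].
have key : forall i, l i != 0 -> ~ mink_sum (G @` X) (Cnz C) (ys i).
  move=> i li [g' [e [[z Xz <-] [[Ce enz] yse]]]].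
  pose ys' j := if j == i then G z else ys j.
  have Mw : M (\sum_(j < p) l j *: ys' j).
    apply: (@cvx_hullK _ _ M M Mcvx (fun _ h => h)); exists p, l, ys'; split => //; split => //; split => //.
    move=> j; rewrite /ys'; case: eqP => _.
      by exists (G z), 0; split; [exists z | split => //; rewrite addr0].
    by case: (Hys j) => pr Spr <-; apply: SbM.
  have Gxe : G x = \sum_(j < p) l j *: ys' j + l i *: e.
    rewrite Geq (bigD1 i) //= [X in _ = X + _](bigD1 i) //= /ys' eqxx yse scalerDr.
    rewrite -!addrA; congr (_ + _); rewrite addrC; congr (_ + _).
    by apply: eq_bigr => j /negPf ->.
  case: Mw => gu [f [[u Xu Gu] [Cf weq]]].
  apply: xmin; exists (G u); split; last by exists u.
  exists (f + l i *: e); split; last by rewrite Gxe weq ?Gu -[_ + f + _]addrA addrK.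
  have Cle : C (l i *: e) by apply: hcone.
  split; first exact: Cadd.
  move=> /eqP; rewrite addr_eq0 => /eqP fe.
  have : l i *: e = 0 by apply: hCp => //; rewrite -fe.
  by move/eqP; rewrite scaler_eq0 (negPf li) /= => /eqP.
have [j0 hj0] : exists j, l j != 0.
  case: (pselect (exists j, l j != 0)) => // nE; exfalso.
  have : \sum_(i < p) l i = 0.
    apply: big1 => j _.
    have [h|h] := eqVneq (l j) 0; first exact: h.
    by exfalso; apply: nE; exists j.
  by rewrite l1 => /eqP; rewrite oner_eq0.
pose kk i := if l i == 0 then j0 else i.
have kkP : forall i, l (kk i) != 0.
  by move=> i; rewrite /kk; have [h|h] := eqVneq (l i) 0; rewrite ?h ?eqxx /= ?(negPf h).
have inB : forall i, l i != 0 ->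
    mink_sum (G @` Xbar) C (ys i + c).
  move=> i li; case: (Hys i) => [[xi yi]] Spr /= yiE; subst yi.
  have [_ [a [b [/= -> [Cb yeq]]]]] := hSb.1 _ Spr.
  exists (G xi), (b + c); split; first by exists xi => //; exists (ys i); split => //; apply: key.
  by split; [exact: Cadd | rewrite yeq addrA].
exists p, l, (fun i => ys (kk i) + c); split => //; split => //; split.
  by move=> i; apply: inB.
have -> : \sum_(i < p) l i *: (ys (kk i) + c) = \sum_(i < p) l i *: (ys i + c).
  apply: eq_bigr => i _; rewrite /kk; case: eqP => // ->; by rewrite !scale0r.
under eq_bigr do rewrite scalerDr.
by rewrite big_split /= -scaler_suml l1 scale1r Geq.
Qed.
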